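(* Let $P$ be an $n\times n$ doubly stochastic matrix satisfying the pattern-symmetry condition $p_{ij}>0\Leftrightarrow p_{ji}>0$ for all $i\neq j$. If $P$ is SIA, then $P$ is a Sarymsakov matrix (i.e., $P\in\mathcal S_1$).
   Context: $\mathcal N=\{1,\ldots,n\}$. A matrix is stochastic if it is entrywise nonnegative with row sums $1$, and doubly stochastic if in addition its column sums are $1$. A stochastic $P$ is SIA if $\lim_{m\to\infty}P^m=\mathbf 1c^T$ for some nonnegative $c$ with entries summing to $1$. For stochastic $P$ and $\mathcal A\subseteq\mathcal N$, $F_P(\mathcal A)=\{j:\ p_{ij}>0\text{ for some } i\in\mathcal A\}$. A Sarymsakov matrix is a stochastic $P$ such that for any disjoint nonempty $\mathcal A,\tilde{\mathcal A}\subseteq\mathcal N$, either $F_P(\mathcal A)\cap F_P(\tilde{\mathcal A})\neq\emptyset$, or $F_P(\mathcal A)\cap F_P(\tilde{\mathcal A})=\emptyset$ and $|F_P(\mathcal A)\cup F_P(\tilde{\mathcal A})|>|\mathcal A\cup\tilde{\mathcal A}|$. *)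

(* Defs.v *)
(* real entries, indices are naturals 0..n-1 (paper's 1..n). *)
From Stdlib Require Import Reals List.
Import ListNotations.
Open Scope R_scope.

Fixpoint sumR (n : nat) (f : nat -> R) : R :=
  match n with O => 0 | S k => sumR k f + f k end.

Definition Mat := nat -> nat -> R.

Definition stochastic (n : nat) (P : Mat) : Prop :=
  (forall i j, (i < n)%nat -> (j < n)%nat -> 0 <= P i j) /\
  (forall i, (i < n)%nat -> sumR n (fun j => P i j) = 1).

Definition doubly_stochastic (n : nat) (P : Mat) : Prop :=
  stochastic n P /\
  (forall j, (j < n)%nat -> sumR n (fun i => P i j) = 1).

Definition matmul (n : nat) (A B : Mat) : Mat :=
  fun i j => sumR n (fun k => A i k * B k j).

Fixpoint matpow (n : nat) (P : Mat) (m : nat) : Mat :=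
  match m with
  | O => fun i j => if Nat.eqb i j then 1 else 0
  | S k => matmul n (matpow n P k) P
  end.

Definition SIA (n : nat) (P : Mat) : Prop :=
  stochastic n P /\
  exists c : nat -> R,
    (forall j, (j < n)%nat -> 0 <= c j) /\ sumR n c = 1 /\
    forall i j, (i < n)%nat -> (j < n)%nat ->
      Un_cv (fun m => matpow n P m i j) (c j).

(* subsets of N = {0..n-1} represented by duplicate-free lists *)
Definition subsetN (n : nat) (A : list nat) : Prop :=
  NoDup A /\ forall i, In i A -> (i < n)%nat.

Definition inF (n : nat) (P : Mat) (A : list nat) (j : nat) : Prop :=
  (j < n)%nat /\ exists i, In i A /\ 0 < P i j.

Definition Sarymsakov (n : nat) (P : Mat) : Prop :=
  stochastic n P /\
  forall A B : list nat,
    subsetN n A -> subsetN n B -> A <> [] -> B <> [] ->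
    (forall x, In x A -> ~ In x B) ->
    (exists j, inF n P A j /\ inF n P B j) \/
    ((~ exists j, inF n P A j /\ inF n P B j) /\
     (* |F(A) u F(B)| > |A u B| = |A| + |B| *)
     exists L : list nat, NoDup L /\
       (forall j, In j L -> inF n P A j \/ inF n P B j) /\
       (length L > length A + length B)%nat).

(* Main.v *)
Require Import Defs.
From Stdlib Require Import Reals List Lia Lra Classical ClassicalEpsilon.
Import ListNotations.
Open Scope R_scope.

Lemma sumR_ext n f g : (forall i, (i < n)%nat -> f i = g i) -> sumR n f = sumR n g.
Proof. induction n; intros H; simpl; auto. rewrite IHn by (intros; apply H; lia). rewrite H by lia. auto. Qed.

Lemma sumR_plus n f g : sumR n (fun i => f i + g i) = sumR n f + sumR n g.
Proof. induction n; simpl; [lra|]. rewrite IHn; lra. Qed.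

Lemma sumR_minus n f g : sumR n (fun i => f i - g i) = sumR n f - sumR n g.
Proof. induction n; simpl; [lra|]. rewrite IHn; lra. Qed.

Lemma sumR_scal n a f : sumR n (fun i => a * f i) = a * sumR n f.
Proof. induction n; simpl; [lra|]. rewrite IHn; lra. Qed.

Lemma sumR_le n f g : (forall i, (i < n)%nat -> f i <= g i) -> sumR n f <= sumR n g.
Proof. induction n; intros H; simpl; [lra|]. pose proof (H n ltac:(lia)).
 pose proof (IHn ltac:(intros; apply H; lia)). lra. Qed.

Lemma sumR_const n a : sumR n (fun _ => a) = INR n * a.
Proof. induction n; simpl sumR; [simpl; lra|]. rewrite IHn, S_INR; lra. Qed.

Lemma sumR_zero n f : (forall i, (i < n)%nat -> f i = 0) -> sumR n f = 0.
Proof. intros H. rewrite (sumR_ext n f (fun _ => 0)) by auto. rewrite sumR_const; lra. Qed.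

Lemma sumR_nonneg n f : (forall i, (i < n)%nat -> 0 <= f i) -> 0 <= sumR n f.
Proof. intros H. rewrite <- (sumR_zero n (fun _ => 0)) by auto. apply sumR_le; auto. Qed.

Lemma sumR_nonneg_zero n f : (forall i, (i < n)%nat -> 0 <= f i) -> sumR n f = 0 ->
  forall i, (i < n)%nat -> f i = 0.
Proof. induction n; intros H Hs i Hi; [lia|]. simpl in Hs.
 assert (0 <= sumR n f) by (apply sumR_nonneg; intros; apply H; lia).
 pose proof (H n ltac:(lia)).
 destruct (Nat.eq_dec i n). subst; lra. apply IHn; [intros; apply H; lia|lra|lia]. Qed.

Lemma sumR_swap n m (f : nat -> nat -> R) :
  sumR n (fun i => sumR m (fun j => f i j)) = sumR m (fun j => sumR n (fun i => f i j)).
Proof. induction n; simpl. symmetry; apply sumR_zero; auto.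
 rewrite IHn. rewrite <- sumR_plus. auto. Qed.

Lemma sumR_delta n x a : (x < n)%nat -> sumR n (fun i => if Nat.eqb i x then a else 0) = a.
Proof. induction n; intros H; [lia|]. simpl. destruct (Nat.eq_dec x n).
 - subst. rewrite Nat.eqb_refl. rewrite sumR_zero. lra. intros i Hi.
   destruct (Nat.eqb_spec i n); [lia|auto].
 - rewrite IHn by lia. destruct (Nat.eqb_spec n x); [lia|lra]. Qed.

Lemma Un_cv_sumR n (u : nat -> nat -> R) l :
  (forall i, (i < n)%nat -> Un_cv (u i) (l i)) ->
  Un_cv (fun m => sumR n (fun i => u i m)) (sumR n l).
Proof. induction n; intros H; simpl.
 - intros e He. exists O. intros. unfold R_dist. rewrite Rminus_0_r, Rabs_R0. lra.
 - apply CV_plus. apply IHn; intros; apply H; lia. apply H; lia. Qed.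

Lemma lim_zero (u : nat -> R) l : Un_cv u l -> (forall k, u (2*k+1)%nat = 0) -> l = 0.
Proof. intros H Hz. destruct (Req_dec l 0); auto. exfalso.
 destruct (H (Rabs l)) as [N HN]. apply Rabs_pos_lt; auto.
 specialize (HN (2*N+1)%nat ltac:(lia)). rewrite Hz in HN. unfold R_dist in HN.
 rewrite Rabs_minus_sym, Rminus_0_r in HN. lra. Qed.

Definition indL (X : list nat) (i : nat) : R := if in_dec Nat.eq_dec i X then 1 else 0.

Lemma indL_len n X : NoDup X -> (forall i, In i X -> (i < n)%nat) ->
  sumR n (indL X) = INR (length X).
Proof. induction X as [|x X IH]; intros Hd Hr.
 - apply sumR_zero. intros; reflexivity.
 - apply NoDup_cons_iff in Hd as [Hx Hd].
   rewrite (sumR_ext n _ (fun i => (if Nat.eqb i x then 1 else 0) + indL X i)).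
   + rewrite sumR_plus, sumR_delta, IH; auto. simpl length. rewrite S_INR. lra.
     intros; apply Hr; simpl; auto. apply Hr; simpl; auto.
   + intros i _. unfold indL. destruct (in_dec Nat.eq_dec i (x :: X)) as [h|h];
     destruct (in_dec Nat.eq_dec i X) as [h'|h']; destruct (Nat.eqb_spec i x); simpl in h;
     subst; try tauto; try lra. destruct h; [lia|tauto]. Qed.

Lemma filter_len n (p : nat -> bool) :
  INR (length (filter p (seq 0 n))) = sumR n (fun j => if p j then 1 else 0).
Proof. induction n. reflexivity. rewrite seq_S, filter_app, length_app, plus_INR, IHn.
 simpl. destruct (p n); simpl; lra. Qed.

Lemma matpow_col n P m : doubly_stochastic n P -> forall j, (j < n)%nat ->
  sumR n (fun i => matpow n P m i j) = 1.
Proof. intros [_ Hc]. induction m; intros j Hj; simpl.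
 - apply sumR_delta; auto.
 - unfold matmul. rewrite sumR_swap.
   rewrite (sumR_ext n _ (fun k => P k j)). apply Hc; auto.
   intros k Hk. rewrite (sumR_ext n _ (fun i => P k j * matpow n P m i k)) by (intros; lra).
   rewrite sumR_scal, IHm by auto. lra.
Qed.

Lemma chain_zero n P (Q : nat -> nat -> Prop) i :
  (forall k j, (k < n)%nat -> (j < n)%nat -> 0 <= P k j) ->
  (forall m k j, (k < n)%nat -> (j < n)%nat -> Q m k -> 0 < P k j -> Q (S m) j) ->
  Q O i -> forall m j, (j < n)%nat -> ~ Q m j -> matpow n P m i j = 0.
Proof. intros Hnn Ht Hi m. induction m; intros j Hj Hq; simpl.
 - destruct (Nat.eqb_spec i j); subst; tauto.
 - unfold matmul. apply sumR_zero. intros k Hk.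
   destruct (classic (Q m k)) as [h|h].
   + assert (P k j = 0). { pose proof (Hnn k j Hk Hj). destruct (Rle_lt_or_eq_dec _ _ H); auto.
       exfalso; apply Hq; eapply Ht; eauto. }
     rewrite H; lra.
   + rewrite IHm; auto; lra.
Qed.

Definition gF n (P : Mat) X j : R := if excluded_middle_informative (inF n P X j) then 1 else 0.
Definition hF n (P : Mat) X j : R := sumR n (fun i => indL X i * P i j).

Lemma indL_01 X i : 0 <= indL X i <= 1.
Proof. unfold indL; destruct in_dec; lra. Qed.

Lemma mass n P X : stochastic n P -> subsetN n X ->
  INR (length X) = sumR n (hF n P X).
Proof. intros [Hnn Hr] [Hd Hx]. unfold hF. rewrite sumR_swap, <- (indL_len n X) by auto.
 apply sumR_ext. intros i Hi. rewrite sumR_scal, Hr by auto. lra. Qed.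

Lemma h_le_g n P X j : doubly_stochastic n P -> (j < n)%nat ->
  0 <= hF n P X j <= gF n P X j.
Proof. intros [[Hnn Hr] Hc] Hj. unfold hF, gF. split.
 - apply sumR_nonneg. intros i Hi. pose proof (indL_01 X i). pose proof (Hnn i j Hi Hj). nra.
 - destruct excluded_middle_informative as [h|h].
   + rewrite <- (Hc j Hj). apply sumR_le. intros i Hi. pose proof (indL_01 X i). pose proof (Hnn i j Hi Hj). nra.
   + right. apply sumR_zero. intros i Hi. unfold indL. destruct in_dec as [hi|hi]; [|lra].
     destruct (Rle_lt_or_eq_dec _ _ (Hnn i j Hi Hj)) as [hp|hp].
     * exfalso; apply h. split; auto. exists i; auto.
     * rewrite <- hp; lra.
Qed.

Lemma tight n P X : doubly_stochastic n P -> subsetN n X ->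
  sumR n (gF n P X) <= INR (length X) ->
  forall i j, (i < n)%nat -> ~ In i X -> inF n P X j -> ~ 0 < P i j.
Proof. intros HD HX Hs i j Hi Hni HF Hp.
 assert (HM := mass n P X (proj1 HD) HX).
 assert (Heq : forall j, (j < n)%nat -> gF n P X j - hF n P X j = 0).
 { apply sumR_nonneg_zero. intros k Hk. pose proof (h_le_g n P X k HD Hk). lra.
   rewrite sumR_minus. pose proof (sumR_le n (hF n P X) (gF n P X)
     ltac:(intros k Hk; apply (h_le_g n P X k HD Hk))). lra. }
 destruct HF as [Hj HF'].
 assert (Hg : gF n P X j = 1). { unfold gF. destruct excluded_middle_informative as [_|h]; auto.
   exfalso; apply h; split; auto. }
 pose proof (Heq j Hj) as E. rewrite Hg in E.
 destruct HD as [[Hnn Hr] Hc].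
 assert (Z : sumR n (fun k => (1 - indL X k) * P k j) = 0).
 { rewrite (sumR_ext n _ (fun k => P k j - indL X k * P k j)) by (intros; ring).
   rewrite sumR_minus, Hc by auto. unfold hF in E. lra. }
 assert (Hn0 : forall k, (k < n)%nat -> 0 <= (1 - indL X k) * P k j).
 { intros k Hk. pose proof (indL_01 X k). pose proof (Hnn k j Hk Hj). nra. }
 pose proof (sumR_nonneg_zero n _ Hn0 Z i Hi) as Z'.
 unfold indL in Z'. destruct in_dec; [tauto|]. lra.
Qed.

Lemma even_2k1 k : Nat.even (2*k+1) = false.
Proof. induction k. reflexivity. replace (2 * S k + 1)%nat with (S (S (2*k+1))) by lia. exact IHk. Qed.

Lemma closed_tight n P X : stochastic n P ->
  (forall i j, (i < n)%nat -> (j < n)%nat -> i <> j -> (0 < P i j <-> 0 < P j i)) ->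
  subsetN n X ->
  (forall i j, (i < n)%nat -> ~ In i X -> inF n P X j -> ~ 0 < P i j) ->
  forall k j, (k < n)%nat -> (j < n)%nat -> (In k X \/ inF n P X k) -> 0 < P k j ->
  In j X \/ inF n P X j.
Proof. intros HS Hsym HX HT k j Hk Hj [h|h] Hp.
 - right. split; auto. exists k; auto.
 - destruct (Nat.eq_dec k j). subst; right; auto.
   left. destruct (classic (In j X)) as [hj|hj]; auto. exfalso.
   apply (HT j k Hj hj h). apply Hsym; auto.
Qed.

Theorem proposition4 (n : nat) (P : Mat) :
  doubly_stochastic n P ->
  (forall i j, (i < n)%nat -> (j < n)%nat -> i <> j ->
     (0 < P i j <-> 0 < P j i)) ->
  SIA n P ->
  Sarymsakov n P.
Proof.
  intros HD Hsym [HS [c [Hc0 [Hc1 Hcv]]]].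
  split; [exact HS|].
  intros A B HA HB HAne HBne Hdis.
  assert (Hcpos : forall j, (j < n)%nat -> 0 < c j).
  { intros j Hj.
    assert (E : sumR n (fun _ => c j) = 1).
    { apply (UL_sequence (fun m => sumR n (fun i => matpow n P m i j))).
      apply (Un_cv_sumR n (fun i m => matpow n P m i j) (fun _ => c j)).
      intros; apply Hcv; auto.
      intros e He; exists O; intros; rewrite (matpow_col n P) by auto.
      unfold R_dist; rewrite Rminus_diag_eq, Rabs_R0; auto. }
    rewrite sumR_const in E. pose proof (pos_INR n). pose proof (Hc0 j Hj).
    destruct (Rle_lt_or_eq_dec _ _ H0); auto. rewrite <- e in E. lra. }
  assert (Hkill : forall (Q : nat -> nat -> Prop) i j,
    (forall m k j, (k < n)%nat -> (j < n)%nat -> Q m k -> 0 < P k j -> Q (S m) j) ->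
    (i < n)%nat -> Q O i -> (j < n)%nat -> (forall k, ~ Q (2*k+1)%nat j) -> False).
  { intros Q i j Ht Hi Hq Hj Hn.
    pose proof (Hcpos j Hj).
    assert (c j = 0). { apply (lim_zero (fun m => matpow n P m i j)). apply Hcv; auto.
      intros k. apply (chain_zero n P Q i); auto. apply HS. }
    lra. }
  destruct (classic (exists j, inF n P A j /\ inF n P B j)) as [Hc|Hnc]; [left; exact Hc|].
  right. split; [exact Hnc|].
  set (pU := fun j => if excluded_middle_informative (inF n P A j \/ inF n P B j) then true else false).
  exists (filter pU (seq 0 n)). split; [apply NoDup_filter, seq_NoDup|]. split.
  { intros j Hj. apply filter_In in Hj as [_ Hj]. unfold pU in Hj.
    destruct excluded_middle_informative; auto; discriminate. }
  destruct (classic (length (filter pU (seq 0 n)) > length A + length B)%nat) as [Hl|Hl]; [exact Hl|].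
  exfalso.
  assert (Hlen : INR (length (filter pU (seq 0 n))) = sumR n (gF n P A) + sumR n (gF n P B)).
  { rewrite filter_len, <- sumR_plus. apply sumR_ext. intros j Hj. unfold pU, gF.
    destruct (excluded_middle_informative (inF n P A j)); destruct (excluded_middle_informative (inF n P B j));
    destruct excluded_middle_informative; try tauto; try lra. exfalso; eauto. }
  assert (Hle : INR (length (filter pU (seq 0 n))) <= INR (length A) + INR (length B)).
  { rewrite <- plus_INR. apply le_INR. lia. }
  pose proof (mass n P A HS HA). pose proof (mass n P B HS HB).
  pose proof (sumR_le n (hF n P A) (gF n P A) ltac:(intros k Hk; apply (h_le_g n P A k HD Hk))).
  pose proof (sumR_le n (hF n P B) (gF n P B) ltac:(intros k Hk; apply (h_le_g n P B k HD Hk))).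
  assert (TA := tight n P A HD HA ltac:(lra)).
  assert (TB := tight n P B HD HB ltac:(lra)).
  assert (CA := closed_tight n P A HS Hsym HA TA).
  assert (CB := closed_tight n P B HS Hsym HB TB).
  destruct A as [|a A']; [congruence|]. set (A := a :: A') in *.
  destruct B as [|b B']; [congruence|]. set (B := b :: B') in *.
  assert (Ha : (a < n)%nat) by (apply (proj2 HA); simpl; auto).
  assert (Hb : (b < n)%nat) by (apply (proj2 HB); simpl; auto).
  assert (FA : forall j, inF n P A j -> In j B).
  { intros j Hj. destruct (classic (In j B \/ inF n P B j)) as [[h|h]|h]; auto.
    - exfalso; eauto.
    - exfalso. apply (Hkill (fun _ x => In x B \/ inF n P B x) b j).
      + intros m k j' Hk Hj' Hq Hp; eapply CB; [exact Hk|exact Hj'|exact Hq|exact Hp].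
      + auto.
      + simpl; auto.
      + apply Hj.
      + intros k; exact h. }
  assert (FB : forall j, inF n P B j -> In j A).
  { intros j Hj. destruct (classic (In j A \/ inF n P A j)) as [[h|h]|h]; auto.
    - exfalso; eauto.
    - exfalso. apply (Hkill (fun _ x => In x A \/ inF n P A x) a j).
      + intros m k j' Hk Hj' Hq Hp; eapply CA; [exact Hk|exact Hj'|exact Hq|exact Hp].
      + auto.
      + simpl; auto.
      + apply Hj.
      + intros k; exact h. }
  apply (Hkill (fun m x => if Nat.even m then In x A else In x B) a a); auto.
  - intros m k j Hk Hj Hq Hp. rewrite Nat.even_succ. unfold Nat.odd.
    destruct (Nat.even m); simpl in *.
    + apply FA. split; auto. exists k; auto.
    + apply FB. split; auto. exists k; auto.
  - simpl; auto.
  - intros k. rewrite even_2k1. intro h. apply (Hdis a); simpl; auto.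
Qed.
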